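(* In any instance of the binary voting game with $N$ agents, every regular strategy profile $\Sigma_N$ is an $\varepsilon$-strong Bayes Nash Equilibrium with $\varepsilon=2B(B+1)\,(1-A(\Sigma_N))$, where $B$ is the upper bound of the utility functions.
   Context: Binary voting game. $N$ agents each vote for $\mathbf{A}$ or $\mathbf{R}$. Unobserved world state $W\in\{L,H\}$ with common prior $P_L,P_H>0$. Conditional on $W$, each agent independently receives a signal $S_n\in\{l,h\}$ with $P_{sw}=\Pr[S_n=s\mid W=w]$, $P_{hH}>P_{hL}$, $P_{lH}<P_{lL}$. With threshold $\mu\in(0,1)$, $\mathbf{A}$ wins iff at least $\mu N$ agents vote $\mathbf{A}$, else $\mathbf{R}$. Agent $n$ has utility $v_n:\{L,H\}\times\{\mathbf{A},\mathbf{R}\}\to\{0,\dots,B\}$ ($B$ a positive integer) with $v_n(H,\mathbf{A})>v_n(L,\mathbf{A})$, $v_n(H,\mathbf{R})<v_n(L,\mathbf{R})$. Every agent is friendly ($v_n(H,\mathbf{A})>v_n(L,\mathbf{A})>v_n(L,\mathbf{R})>v_n(H,\mathbf{R})$), unfriendly ($v_n(L,\mathbf{R})>v_n(H,\mathbf{R})>v_n(H,\mathbf{A})>v_n(L,\mathbf{A})$), or contingent ($v_n(H,\mathbf{A})>v_n(H,\mathbf{R})$, $v_n(L,\mathbf{R})>v_n(L,\mathbf{A})$). With fixed constants $\alpha_F,\alpha_U,\alpha_C\ge0$ summing to $1$: $\lfloor\alpha_F N\rfloor$ friendly, $\lfloor\alpha_U N\rfloor$ unfriendly, the rest contingent. Standing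 assumption: $\alpha_F<\mu$ and $\alpha_U<1-\mu$, so the informed majority decision is $\mathbf{A}$ in $H$ and $\mathbf{R}$ in $L$. Strategy $\sigma=(\beta_l,\beta_h)$, $\beta_s$ = probability of voting $\mathbf{A}$ on signal $s$. Regular profile: friendly agents always vote $\mathbf{A}$, unfriendly agents always vote $\mathbf{R}$. $\lambda^{\mathbf{X}}_w(\Sigma)$: ex-ante probability that $\mathbf{X}$ wins in state $w$. Fidelity $A(\Sigma)=P_L\lambda^{\mathbf{R}}_L(\Sigma)+P_H\lambda^{\mathbf{A}}_H(\Sigma)$. Expected utility $u_n(\Sigma)=\sum_w P_w(\lambda^{\mathbf{A}}_w(\Sigma)v_n(w,\mathbf{A})+\lambda^{\mathbf{R}}_w(\Sigma)v_n(w,\mathbf{R}))$. $\Sigma$ is an $\varepsilon$-strong Bayes Nash Equilibrium if there is no set $D$ of agents and profile $\Sigma'$ with $\sigma'_n=\sigma_n$ for $n\notin D$, $u_n(\Sigma')\ge u_n(\Sigma)$ for all $n\in D$ and $u_n(\Sigma')>u_n(\Sigma)+\varepsilon$ for some $n\in D$. *)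

(* Defs.v *)
From HB Require Import structures.
From mathcomp Require Import all_boot all_order all_algebra.
From mathcomp Require Import reals.
Set Implicit Arguments. Unset Strict Implicit. Unset Printing Implicit Defensive.
Import Order.TTheory GRing.Theory Num.Theory.
Local Open Scope ring_scope.

Inductive world := L | H.
Inductive signal := sl | sh.
Inductive outcome := oA | oR.

(* A (mixed) strategy sigma = (beta_l, beta_h): probability of voting A on
   signal l, resp. on signal h. *)
Definition strategy (R : realType) := (R * R)%type.
Definition beta_l (R : realType) (s : strategy R) : R := s.1.
Definition beta_h (R : realType) (s : strategy R) : R := s.2.
Definition beta (R : realType) (s : strategy R) (x : signal) : R :=
  match x with sl => beta_l s | sh => beta_h s end.

Definition valid_strategy (R : realType) (s : strategy R) : Prop :=
  (0 <= beta_l s <= 1) /\ (0 <= beta_h s <= 1).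

(* Probability that an agent playing s votes A, conditional on state w,
   given signal likelihoods Psig x w = Pr[S_n = x | W = w]. *)
Definition probA (R : realType) (Psig : signal -> world -> R)
  (s : strategy R) (w : world) : R :=
  Psig sl w * beta s sl + Psig sh w * beta s sh.

(* Probability (conditional on state w) of the vote vector x
   (x n = true means agent n votes A); agents vote independently given w. *)
Definition prob_votes (R : realType) (N : nat) (Psig : signal -> world -> R)
  (Sigma : 'I_N -> strategy R) (w : world) (x : {ffun 'I_N -> bool}) : R :=
  \prod_(n < N) (if x n then probA Psig (Sigma n) w
                 else 1 - probA Psig (Sigma n) w).

Definition A_wins (R : realType) (N : nat) (mu : R) (x : {ffun 'I_N -> bool}) : bool :=
  mu * N%:R <= (#|[set n | x n]|)%:R.

Definition lamA (R : realType) (N : nat) (Psig : signal -> world -> R) (mu : R)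
  (Sigma : 'I_N -> strategy R) (w : world) : R :=
  \sum_(x : {ffun 'I_N -> bool} | A_wins mu x) prob_votes Psig Sigma w x.

Definition lamR (R : realType) (N : nat) (Psig : signal -> world -> R) (mu : R)
  (Sigma : 'I_N -> strategy R) (w : world) : R :=
  \sum_(x : {ffun 'I_N -> bool} | ~~ A_wins mu x) prob_votes Psig Sigma w x.

Definition lam (R : realType) (N : nat) (Psig : signal -> world -> R) (mu : R)
  (Sigma : 'I_N -> strategy R) (w : world) (o : outcome) : R :=
  match o with oA => lamA Psig mu Sigma w | oR => lamR Psig mu Sigma w end.

Definition fidelity (R : realType) (N : nat) (P : world -> R)
  (Psig : signal -> world -> R) (mu : R) (Sigma : 'I_N -> strategy R) : R :=
  P L * lamR Psig mu Sigma L + P H * lamA Psig mu Sigma H.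

Definition exp_util (R : realType) (N : nat) (P : world -> R)
  (Psig : signal -> world -> R) (mu : R) (vn : world -> outcome -> nat)
  (Sigma : 'I_N -> strategy R) : R :=
  \sum_(w <- [:: L; H])
     P w * (lamA Psig mu Sigma w * (vn w oA)%:R
            + lamR Psig mu Sigma w * (vn w oR)%:R).

Definition friendly (vn : world -> outcome -> nat) : bool :=
  [&& (vn L oA < vn H oA)%N, (vn L oR < vn L oA)%N & (vn H oR < vn L oR)%N].
Definition unfriendly (vn : world -> outcome -> nat) : bool :=
  [&& (vn H oR < vn L oR)%N, (vn H oA < vn H oR)%N & (vn L oA < vn H oA)%N].
Definition contingent (vn : world -> outcome -> nat) : bool :=
  (vn H oR < vn H oA)%N && (vn L oA < vn L oR)%N.

Definition regular (R : realType) (N : nat) (v : 'I_N -> world -> outcome -> nat)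
  (Sigma : 'I_N -> strategy R) : Prop :=
  (forall n, valid_strategy (Sigma n)) /\
  (forall n, friendly (v n) -> Sigma n = (1, 1)) /\
  (forall n, unfriendly (v n) -> Sigma n = (0, 0)).

Definition eps_strong_BNE (R : realType) (N : nat) (P : world -> R)
  (Psig : signal -> world -> R) (mu : R) (v : 'I_N -> world -> outcome -> nat)
  (eps : R) (Sigma : 'I_N -> strategy R) : Prop :=
  ~ exists (D : {set 'I_N}) (Sigma' : 'I_N -> strategy R),
      [/\ (forall n, valid_strategy (Sigma' n)),
          (forall n, n \notin D -> Sigma' n = Sigma n),
          (forall n, n \in D ->
             exp_util P Psig mu (v n) Sigma <= exp_util P Psig mu (v n) Sigma') &
          (exists2 n, n \in D &
             exp_util P Psig mu (v n) Sigma + eps < exp_util P Psig mu (v n) Sigma')].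

(* Main.v *)
Require Import Defs.
From HB Require Import structures.
From mathcomp Require Import all_boot all_order all_algebra.
From mathcomp Require Import reals.
From mathcomp Require Import ring lra.
Set Implicit Arguments. Unset Strict Implicit.
Import Order.TTheory GRing.Theory Num.Theory.
Local Open Scope ring_scope.

Definition Wt {R : realType} {N : nat} (p : 'I_N -> R) (x : {ffun 'I_N -> bool}) : R :=
  \prod_(n < N) (if x n then p n else 1 - p n).

Lemma Wt_ge0 (R : realType) (N : nat) (p : 'I_N -> R) x :
  (forall n, 0 <= p n <= 1) -> 0 <= Wt p x.
Proof.
move=> hp; apply: prodr_ge0 => n _; case: (x n); have := hp n; lra.
Qed.

Lemma Wt_sum1 (R : realType) (N : nat) (p : 'I_N -> R) :
  \sum_x Wt p x = 1.
Proof.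
rewrite /Wt -(bigA_distr_bigA (fun n (b : bool) => if b then p n else 1 - p n)).
apply: big1 => n _; rewrite big_bool /=; lra.
Qed.

Lemma Wt_split (R : realType) (N : nat) (p : 'I_N -> R) (f : pred {ffun 'I_N -> bool}) :
  \sum_(x | f x) Wt p x + \sum_(x | ~~ f x) Wt p x = 1.
Proof. by rewrite -(@Wt_sum1 R N p) [in RHS](bigID f). Qed.

Definition tog {N : nat} (i : 'I_N) (x : {ffun 'I_N -> bool}) : {ffun 'I_N -> bool} :=
  [ffun n => if n == i then ~~ x n else x n].

Lemma tog_inv N (i : 'I_N) : involutive (tog i).
Proof.
move=> x; apply/ffunP => n; rewrite /tog !ffunE; case: eqP => // ->; by rewrite negbK.
Qed.

Definition monof {N} (f : pred {ffun 'I_N -> bool}) :=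
  forall x y : {ffun 'I_N -> bool}, (forall n, x n -> y n) -> f x -> f y.

Lemma mono_one (R : realType) (N : nat) (p q : 'I_N -> R) (i : 'I_N)
  (f : pred {ffun 'I_N -> bool}) :
  monof f -> (forall n, 0 <= p n <= 1) -> (forall n, n != i -> p n = q n) ->
  p i <= q i ->
  \sum_(x | f x) Wt p x <= \sum_(x | f x) Wt q x.
Proof.
move=> mf hp hpq hi.
pose rest x := \prod_(n < N | n != i) (if x n then p n else 1 - p n).
have rest_ge0 : forall x, 0 <= rest x.
  move=> x; apply: prodr_ge0 => n _; case: (x n); have := hp n; lra.
have Wp : forall x, Wt p x = (if x i then p i else 1 - p i) * rest x.
  by move=> x; rewrite /Wt (bigD1 i).
have Wq : forall x, Wt q x = (if x i then q i else 1 - q i) * rest x.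
  move=> x; rewrite /Wt (bigD1 i) //=; congr (_ * _).
  by apply: eq_bigr => n hn; rewrite hpq.
have resttog : forall x, rest (tog i x) = rest x.
  move=> x; apply: eq_bigr => n hn; by rewrite /tog ffunE (negbTE hn).
rewrite -subr_ge0 -sumrB.
under eq_bigr do rewrite Wp Wq -mulrBl.
rewrite (bigID (fun x : {ffun 'I_N -> bool} => x i)) /=.
under eq_bigr => x /andP[_ ->] do [].
under [X in _ + X]eq_bigr => x /andP[_ /negbTE ->] do [].
rewrite -!mulr_sumr.
have -> : 1 - q i - (1 - p i) = - (q i - p i) by lra.
rewrite mulNr subr_ge0; apply: ler_wpM2l; first lra.
rewrite (reindex_inj (can_inj (@tog_inv N i))) /=.
rewrite big_mkcond [X in _ <= X]big_mkcond /=; apply: ler_sum => x _.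
rewrite resttog /tog ffunE eqxx negbK.
case hx: (x i); rewrite ?andbF ?andbT //.
case hf: (f _); last by case: (f x).
have -> : f x.
  apply: mf hf => n; rewrite ffunE; case: eqP => [->|]; by rewrite ?hx.
by [].
Qed.

Lemma mono_all (R : realType) (N : nat) (p q : 'I_N -> R)
  (f : pred {ffun 'I_N -> bool}) :
  monof f -> (forall n, 0 <= p n <= 1) -> (forall n, 0 <= q n <= 1) ->
  (forall n, p n <= q n) ->
  \sum_(x | f x) Wt p x <= \sum_(x | f x) Wt q x.
Proof.
move=> mf.
suff H : forall k, (k <= N)%N -> forall p q : 'I_N -> R,
  (forall n, 0 <= p n <= 1) -> (forall n, 0 <= q n <= 1) ->
  (forall n, p n <= q n) -> (forall n : 'I_N, (k <= n)%N -> p n = q n) ->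
  \sum_(x | f x) Wt p x <= \sum_(x | f x) Wt q x.
  move=> hp hq hpq; apply: (H N (leqnn N)) => // n; by rewrite leqNgt ltn_ord.
elim=> [|k IH] hk p' q' hp hq hpq heq.
  rewrite le_eqVlt; apply/orP; left; apply/eqP/eq_bigr => x _; apply: eq_bigr => n _; by rewrite heq.
pose i := Ordinal hk.
pose r := fun n => if n == i then p' n else q' n.
apply: (@le_trans _ _ (\sum_(x | f x) Wt r x)).
  apply: IH; first exact: ltnW.
  - exact: hp.
  - by move=> n; rewrite /r; case: eqP.
  - by move=> n; rewrite /r; case: eqP => // _; exact: hpq.
  - move=> n hn; rewrite /r; case: eqP => // hni; apply: heq.
    rewrite ltn_neqAle hn andbT; apply/eqP => hkn; apply: hni; apply: val_inj => /=.
    by rewrite hkn.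
apply: (@mono_one R N r q' i) => //.
- by move=> n; rewrite /r; case: eqP.
- by move=> n /negbTE hn; rewrite /r hn.
- by rewrite /r eqxx.
Qed.

Lemma ar_mul {R : realType} {y e c Bv : R} :
  y <= e -> 0 <= e -> 0 <= c <= Bv -> y * c <= e * Bv.
Proof. move=> h1 h2 /andP[h3 h4]; case: (lerP 0 y) => hy; nra. Qed.

Lemma ar_cont {R : realType} (x y e Bv c1 c2 : R) :
  -e <= x -> y <= e -> 0 <= e -> 1 <= Bv -> -Bv <= c1 <= 0 -> 0 <= c2 <= Bv ->
  x * c1 + y * c2 <= 2 * Bv * (Bv + 1) * e.
Proof.
move=> hx hy he hB /andP[h1 h2] hc2.
have := ar_mul hy he hc2.
have : (-x) * (-c1) <= e * Bv by apply: ar_mul; [lra|lra|apply/andP; split; lra].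
nra.
Qed.

Lemma ar_FC {R : realType} (x y e Bv d1 d2 a1 a2 : R) :
  -e <= x -> y <= e -> 0 <= e -> 1 <= Bv -> 0 <= d1 <= Bv -> 0 <= d2 <= Bv ->
  -Bv <= a1 <= -1 -> 0 <= a2 <= Bv -> 0 <= x * a1 + y * a2 ->
  x * d1 + y * d2 <= 2 * Bv * (Bv + 1) * e.
Proof.
move=> hx hy he hB /andP[h1 h2] hd2 /andP[h3 h4] ha2 hm.
have := ar_mul hy he hd2.
have := ar_mul hy he ha2.
case: (lerP x 0) => hx0.
  nra.
move=> hya2 hyd2.
have hxe : x <= e * Bv by nra.
have : x * d1 <= (e * Bv) * Bv by nra.
nra.
Qed.

Lemma ar_FU {R : realType} (x y e Bv d1 d2 u1 u2 : R) :
  y <= e -> 0 <= e -> 1 <= Bv -> 0 < d1 -> d1 < d2 -> d2 <= Bv ->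
  u1 < u2 -> u2 < 0 -> 0 <= x * u1 + y * u2 ->
  x * d1 + y * d2 <= 2 * Bv * (Bv + 1) * e.
Proof.
move=> hy he hB hd1 hd12 hd2 hu12 hu2 hm.
have hyd2 : y * d2 <= e * Bv by apply: ar_mul => //; rewrite hd2 andbT; lra.
case: (lerP x 0) => hx0; first nra.
have hy0 : y < 0 by nra.
rewrite leNgt; apply/negP => hg.
have h1 : x * d1 > - y * d2 by nra.
have h2 : - y * (- u2) >= x * (- u1) by nra.
have h3 : x * d1 * (- u2) > (- y * d2) * (- u2) by rewrite ltr_pM2r; lra.
have h4 : (- y * (- u2)) * d2 >= x * (- u1) * d2 by rewrite ler_pM2r; lra.
have h5 : d1 * (- u2) < d2 * (- u1) by nra.
have h6 : x * (d1 * (- u2)) < x * (d2 * (- u1)) by rewrite ltr_pM2l.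
have e1 : x * d1 * (- u2) = x * (d1 * (- u2)) by ring.
have e2 : (- y * d2) * (- u2) = (- y * (- u2)) * d2 by ring.
have e3 : x * (- u1) * d2 = x * (d2 * (- u1)) by ring.
lra.
Qed.

Lemma lamA_Wt (R : realType) (N : nat) (Psig : signal -> world -> R) (mu : R)
  (S : 'I_N -> strategy R) w :
  lamA Psig mu S w = \sum_(x | A_wins mu x) Wt (fun n => probA Psig (S n) w) x.
Proof. by []. Qed.

Lemma lamR_Wt (R : realType) (N : nat) (Psig : signal -> world -> R) (mu : R)
  (S : 'I_N -> strategy R) w :
  lamR Psig mu S w = \sum_(x | ~~ A_wins mu x) Wt (fun n => probA Psig (S n) w) x.
Proof. by []. Qed.

Lemma probA01 (R : realType) (Psig : signal -> world -> R) (s : strategy R) w :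
  valid_strategy s -> (forall x w, 0 <= Psig x w) ->
  (forall w, Psig sl w + Psig sh w = 1) -> 0 <= probA Psig s w <= 1.
Proof.
move=> [/andP[h1 h2] /andP[h3 h4]] hps hsum.
have := hps sl w; have := hps sh w; have := hsum w.
rewrite /probA /= /beta_l /beta_h in h1 h2 h3 h4 *.
move=> hs h5 h6; apply/andP; split; nra.
Qed.

Lemma lamR_eq (R : realType) (N : nat) (Psig : signal -> world -> R) (mu : R)
  (S : 'I_N -> strategy R) w :
  lamR Psig mu S w = 1 - lamA Psig mu S w.
Proof.
have := @Wt_split R N (fun n => probA Psig (S n) w) (A_wins mu).
rewrite lamR_Wt lamA_Wt; lra.
Qed.

Lemma lamA01 (R : realType) (N : nat) (Psig : signal -> world -> R) (mu : R)
  (S : 'I_N -> strategy R) w :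
  (forall n, valid_strategy (S n)) -> (forall x w, 0 <= Psig x w) ->
  (forall w, Psig sl w + Psig sh w = 1) -> 0 <= lamA Psig mu S w <= 1.
Proof.
move=> hv hps hsum.
have h0 : forall f : pred {ffun 'I_N -> bool},
    0 <= \sum_(x | f x) Wt (fun n => probA Psig (S n) w) x.
  move=> f; apply: sumr_ge0 => x _; apply: Wt_ge0 => n; exact: probA01.
have := lamR_eq Psig mu S w; rewrite lamR_Wt lamA_Wt.
have := h0 (A_wins mu); have := h0 (fun x => ~~ A_wins mu x).
move=> ha hb he; apply/andP; split; lra.
Qed.

Lemma util_eq (R : realType) (N : nat) (P : world -> R)
  (Psig : signal -> world -> R) (mu : R) (vn : world -> outcome -> nat)
  (S : 'I_N -> strategy R) :
  exp_util P Psig mu vn S =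
  P L * (lamA Psig mu S L * (vn L oA)%:R + (1 - lamA Psig mu S L) * (vn L oR)%:R)
  + P H * (lamA Psig mu S H * (vn H oA)%:R + (1 - lamA Psig mu S H) * (vn H oR)%:R).
Proof. by rewrite /exp_util big_cons big_cons big_nil addr0 !lamR_eq. Qed.

Lemma A_wins_mono (R : realType) (N : nat) (mu : R) : monof (@A_wins R N mu).
Proof.
move=> x y hxy; rewrite /A_wins => h; apply: (le_trans h).
rewrite ler_nat; apply: subset_leq_card; apply/subsetP => n; rewrite !inE; exact: hxy.
Qed.

Lemma natlt (R : realType) (a b : nat) : (a < b)%N -> (a%:R : R) + 1 <= b%:R.
Proof. by move=> h; rewrite -[1]/(1%:R) -natrD ler_nat addn1. Qed.



Lemma case_C {R : realType} (x y e Bv : R) (nLA nLR nHA nHR : R) :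
  -e <= x -> y <= e -> 0 <= e -> 1 <= Bv -> 0 <= nLA -> nLR <= Bv -> 0 <= nHR -> nHA <= Bv ->
  nHR + 1 <= nHA -> nLA + 1 <= nLR ->
  x * (nLA - nLR) + y * (nHA - nHR) <= 2 * Bv * (Bv + 1) * e.
Proof.
move=> hx hy he hB a1 a2 a3 a4 a5 a6.
apply: ar_cont => //; apply/andP; split; lra.
Qed.

Lemma case_FC {R : realType} (x y e Bv : R) (nLA nLR nHA nHR mLA mLR mHA mHR : R) :
  -e <= x -> y <= e -> 0 <= e -> 1 <= Bv ->
  0 <= nLR -> nLA <= Bv -> 0 <= nHR -> nHA <= Bv ->
  nLR + 1 <= nLA -> nLA + 1 <= nHA -> nHR + 1 <= nLR ->
  0 <= mLA -> mLR <= Bv -> 0 <= mHR -> mHA <= Bv ->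
  mHR + 1 <= mHA -> mLA + 1 <= mLR ->
  0 <= x * (mLA - mLR) + y * (mHA - mHR) ->
  x * (nLA - nLR) + y * (nHA - nHR) <= 2 * Bv * (Bv + 1) * e.
Proof.
move=> hx hy he hB a1 a2 a3 a4 a5 a6 a7 b1 b2 b3 b4 b5 b6 hm.
apply: (ar_FC (a1 := mLA - mLR) (a2 := mHA - mHR)) => //; apply/andP; split; lra.
Qed.

Lemma case_FU {R : realType} (x y e Bv : R) (nLA nLR nHA nHR mLA mLR mHA mHR : R) :
  y <= e -> 0 <= e -> 1 <= Bv ->
  0 <= nHR -> nHA <= Bv ->
  nLR + 1 <= nLA -> nLA + 1 <= nHA -> nHR + 1 <= nLR ->
  mHR + 1 <= mLR -> mHA + 1 <= mHR -> mLA + 1 <= mHA ->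
  0 <= x * (mLA - mLR) + y * (mHA - mHR) ->
  x * (nLA - nLR) + y * (nHA - nHR) <= 2 * Bv * (Bv + 1) * e.
Proof.
move=> hy he hB a3 a4 a5 a6 a7 b4 b5 b6 hm.
apply: (ar_FU (u1 := mLA - mLR) (u2 := mHA - mHR)) => //; lra.
Qed.

Lemma case_UC {R : realType} (x y e Bv : R) (nLA nLR nHA nHR mLA mLR mHA mHR : R) :
  -e <= x -> y <= e -> 0 <= e -> 1 <= Bv ->
  0 <= nHA -> nHR <= Bv -> 0 <= nLA -> nLR <= Bv ->
  nHA + 1 <= nHR -> nHR + 1 <= nLR -> nLA + 1 <= nHA ->
  0 <= mHR -> mHA <= Bv -> 0 <= mLA -> mLR <= Bv ->
  mLA + 1 <= mLR -> mHR + 1 <= mHA ->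
  0 <= x * (mLA - mLR) + y * (mHA - mHR) ->
  x * (nLA - nLR) + y * (nHA - nHR) <= 2 * Bv * (Bv + 1) * e.
Proof.
move=> hx hy he hB a1 a2 a3 a4 a5 a6 a7 b1 b2 b3 b4 b5 b6 hm.
have -> : x * (nLA - nLR) + y * (nHA - nHR) = (- y) * (nHR - nHA) + (- x) * (nLR - nLA) by ring.
apply: (case_FC (mLA := mHR) (mLR := mHA) (mHA := mLR) (mHR := mLA)) => //; try lra.
Qed.

Lemma case_UF {R : realType} (x y e Bv : R) (nLA nLR nHA nHR mLA mLR mHA mHR : R) :
  -e <= x -> 0 <= e -> 1 <= Bv ->
  0 <= nLA -> nLR <= Bv ->
  nHA + 1 <= nHR -> nHR + 1 <= nLR -> nLA + 1 <= nHA ->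
  mLA + 1 <= mHA -> mLR + 1 <= mLA -> mHR + 1 <= mLR ->
  0 <= x * (mLA - mLR) + y * (mHA - mHR) ->
  x * (nLA - nLR) + y * (nHA - nHR) <= 2 * Bv * (Bv + 1) * e.
Proof.
move=> hx he hB a3 a4 a5 a6 a7 b4 b5 b6 hm.
have -> : x * (nLA - nLR) + y * (nHA - nHR) = (- y) * (nHR - nHA) + (- x) * (nLR - nLA) by ring.
apply: (case_FU (mLA := mHR) (mLR := mHA) (mHA := mLR) (mHR := mLA)) => //; try lra.
Qed.

Lemma case_mono {R : realType} (x y eps a b c d : R) :
  0 <= eps -> x * (a - b) <= 0 -> y * (c - d) <= 0 ->
  x * (a - b) + y * (c - d) <= eps.
Proof. lra. Qed.


Theorem lemma1 (R : realType) (N : nat) (P : world -> R)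
  (Psig : signal -> world -> R) (mu : R) (B : nat)
  (v : 'I_N -> world -> outcome -> nat) (aF aU aC : R)
  (Sigma : 'I_N -> strategy R) :
  (0 < N)%N ->
  (* common prior *)
  0 < P L -> 0 < P H -> P L + P H = 1 ->
  (* signal likelihoods *)
  (forall x w, 0 <= Psig x w) ->
  (forall w, Psig sl w + Psig sh w = 1) ->
  Psig sh H > Psig sh L -> Psig sl H < Psig sl L ->
  (* threshold *)
  0 < mu < 1 ->
  (* utilities with values in {0, ..., B}, B a positive integer *)
  (0 < B)%N ->
  (forall n w o, (v n w o <= B)%N) ->
  (forall n, (v n H oA > v n L oA)%N /\ (v n H oR < v n L oR)%N) ->
  (* every agent is friendly, unfriendly or contingent *)
  (forall n, friendly (v n) \/ unfriendly (v n) \/ contingent (v n)) ->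
  (* population fractions *)
  0 <= aF -> 0 <= aU -> 0 <= aC -> aF + aU + aC = 1 ->
  (#|[set n | friendly (v n)]| : int) = Num.floor (aF * N%:R) ->
  (#|[set n | unfriendly (v n)]| : int) = Num.floor (aU * N%:R) ->
  (* standing assumption *)
  aF < mu -> aU < 1 - mu ->
  regular v Sigma ->
  eps_strong_BNE P Psig mu v
    (2 * B%:R * (B%:R + 1) * (1 - fidelity P Psig mu Sigma)) Sigma.
Proof.
move=> hN hPL hPH hP1 hps hsum _ _ _ hB hvB hmon htype _ _ _ _ _ _ _ _ [hv [hfr hun]].
move=> [D [S' [hv' hout hweak [n nD hgain]]]].
have hSig := lamA01 mu L hv hps hsum; have hSigH := lamA01 mu H hv hps hsum.
have hS' := lamA01 mu L hv' hps hsum; have hS'H := lamA01 mu H hv' hps hsum.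
move: hSig hSigH hS' hS'H.
rewrite /fidelity lamR_eq in hgain.
have hg : forall m, exp_util P Psig mu (v m) S' - exp_util P Psig mu (v m) Sigma =
   P L * (lamA Psig mu S' L - lamA Psig mu Sigma L) * ((v m L oA)%:R - (v m L oR)%:R)
   + P H * (lamA Psig mu S' H - lamA Psig mu Sigma H) * ((v m H oA)%:R - (v m H oR)%:R).
  by move=> m; rewrite !util_eq; ring.
have monoF : (forall m, m \in D -> friendly (v m)) ->
    forall w, lamA Psig mu S' w <= lamA Psig mu Sigma w.
  move=> hall w; rewrite !lamA_Wt; apply: mono_all.
  - exact: A_wins_mono.
  - by move=> m; apply: probA01.
  - by move=> m; apply: probA01.
  move=> m; case: (boolP (m \in D)) => hm; last by rewrite hout.
  rewrite (hfr m (hall m hm)) /probA /= /beta_l /beta_h /= !mulr1 hsum.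
  by have /andP[_ ->] := probA01 w (hv' m) hps hsum.
have monoU : (forall m, m \in D -> unfriendly (v m)) ->
    forall w, lamA Psig mu Sigma w <= lamA Psig mu S' w.
  move=> hall w; rewrite !lamA_Wt; apply: mono_all.
  - exact: A_wins_mono.
  - by move=> m; apply: probA01.
  - by move=> m; apply: probA01.
  move=> m; case: (boolP (m \in D)) => hm; last by rewrite hout.
  rewrite (hun m (hall m hm)) /probA /= /beta_l /beta_h /= !mulr0 addr0.
  by have /andP[-> _] := probA01 w (hv' m) hps hsum.
move: hg monoF monoU hgain hweak.
set aL := lamA Psig mu Sigma L; set aH := lamA Psig mu Sigma H.
set bL := lamA Psig mu S' L; set bH := lamA Psig mu S' H.
move=> hg monoF monoU hgain hweak /andP[haL1 haL2] /andP[haH1 haH2] /andP[hbL1 hbL2] /andP[hbH1 hbH2].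
set e := P L * aL + P H * (1 - aH).
have heps : 1 - (P L * (1 - aL) + P H * aH) = e.
  rewrite /e; have -> : P L = 1 - P H by lra.
  ring.
rewrite heps in hgain.
set x := P L * (bL - aL); set y := P H * (bH - aH).
have p1 : 0 <= P L * aL by apply: mulr_ge0; lra.
have p2 : 0 <= P H * (1 - aH) by apply: mulr_ge0; lra.
have p3 : 0 <= P L * bL by apply: mulr_ge0; lra.
have p4 : P H * bH <= P H * 1 by apply: ler_wpM2l; lra.
have he : 0 <= e by rewrite /e; lra.
have hx : - e <= x by rewrite /x /e; lra.
have hy : y <= e by rewrite /y /e; lra.
set Bv : R := B%:R.
have hB1 : 1 <= Bv by rewrite /Bv (_ : 1 = 1%:R) // ler_nat.
have hv0 : forall (m0 : 'I_N) (w0 : world) (o0 : outcome), (0 : R) <= (v m0 w0 o0)%:R.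
  move=> m0 w0 o0; exact: ler0n.
have hvB' : forall (m0 : 'I_N) (w0 : world) (o0 : outcome), (v m0 w0 o0)%:R <= Bv.
  move=> m0 w0 o0; rewrite /Bv ler_nat; exact: hvB.
set gain := fun m => x * ((v m L oA)%:R - (v m L oR)%:R) + y * ((v m H oA)%:R - (v m H oR)%:R).
have hgn : 2 * Bv * (Bv + 1) * e < gain n.
  have := hg n; rewrite /gain /x /y; lra.
have hgm : forall m, m \in D -> 0 <= gain m.
  move=> m hm; have := hg m; have := hweak m hm; rewrite /gain /x /y; lra.
have hepsg : 0 <= 2 * Bv * (Bv + 1) * e.
  by apply: mulr_ge0 => //; apply: mulr_ge0; lra.
clear hgain hweak hg heps p1 p2 p3 p4 hP1.
have contra : gain n <= 2 * Bv * (Bv + 1) * e -> False.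
  by move=> hle; have := lt_le_trans hgn hle; rewrite ltxx.
apply: contra; rewrite /gain.
case: (htype n) => [hf|[hu|hc]].
- have /and3P[f1 f2 f3] := hf.
  have g1 := natlt R f1; have g2 := natlt R f2; have g3 := natlt R f3.
  case: (boolP [exists m in D, ~~ friendly (v m)]).
  + move=> /exists_inP[m hm hnf].
    have := hgm m hm; rewrite /gain => hgm'.
    case: (htype m) => [hf'|[hu'|hc']]; first by rewrite hf' in hnf.
    * have /and3P[u1 u2 u3] := hu'.
      exact: (case_FU hy he hB1 (hv0 _ _ _) (hvB' _ _ _) g2 g1 g3
                (natlt R u1) (natlt R u2) (natlt R u3) hgm').
    * have /andP[c1 c2] := hc'.
      exact: (case_FC hx hy he hB1 (hv0 _ _ _) (hvB' _ _ _) (hv0 _ _ _) (hvB' _ _ _) g2 g1 g3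
                (hv0 _ _ _) (hvB' _ _ _) (hv0 _ _ _) (hvB' _ _ _) (natlt R c1) (natlt R c2) hgm').
  + rewrite negb_exists_in => /forall_inP hall.
    have hall' : forall m, m \in D -> friendly (v m).
      by move=> m hm; have := hall m hm; rewrite negbK.
    have h1 : bL <= aL := monoF hall' L.
    have h2 : bH <= aH := monoF hall' H.
    apply: case_mono => //.
    * apply: mulr_le0_ge0; last by rewrite subr_ge0 ler_nat ltnW.
      rewrite /x; apply: mulr_ge0_le0; [exact: ltW | by rewrite subr_le0].
    * apply: mulr_le0_ge0; last by rewrite subr_ge0 ler_nat ltnW // (ltn_trans f3 (ltn_trans f2 f1)).
      rewrite /y; apply: mulr_ge0_le0; [exact: ltW | by rewrite subr_le0].
- have /and3P[f1 f2 f3] := hu.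
  have g1 := natlt R f1; have g2 := natlt R f2; have g3 := natlt R f3.
  case: (boolP [exists m in D, ~~ unfriendly (v m)]).
  + move=> /exists_inP[m hm hnf].
    have := hgm m hm; rewrite /gain => hgm'.
    case: (htype m) => [hf'|[hu'|hc']]; last 2 first.
    * by rewrite hu' in hnf.
    * have /andP[c1 c2] := hc'.
      exact: (case_UC hx hy he hB1 (hv0 _ _ _) (hvB' _ _ _) (hv0 _ _ _) (hvB' _ _ _) g2 g1 g3
                (hv0 _ _ _) (hvB' _ _ _) (hv0 _ _ _) (hvB' _ _ _) (natlt R c2) (natlt R c1) hgm').
    * have /and3P[u1 u2 u3] := hf'.
      exact: (case_UF hx he hB1 (hv0 _ _ _) (hvB' _ _ _) g2 g1 g3
                (natlt R u1) (natlt R u2) (natlt R u3) hgm').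
  + rewrite negb_exists_in => /forall_inP hall.
    have hall' : forall m, m \in D -> unfriendly (v m).
      by move=> m hm; have := hall m hm; rewrite negbK.
    have h1 : aL <= bL := monoU hall' L.
    have h2 : aH <= bH := monoU hall' H.
    apply: case_mono => //.
    * apply: mulr_ge0_le0; first by rewrite /x; apply: mulr_ge0; [exact: ltW | by rewrite subr_ge0].
      by rewrite subr_le0 ler_nat ltnW // (ltn_trans f3 (ltn_trans f2 f1)).
    * apply: mulr_ge0_le0; first by rewrite /y; apply: mulr_ge0; [exact: ltW | by rewrite subr_ge0].
      by rewrite subr_le0 ler_nat (ltnW f2).
- have /andP[c1 c2] := hc.
  exact: (case_C hx hy he hB1 (hv0 _ _ _) (hvB' _ _ _) (hv0 _ _ _) (hvB' _ _ _)
            (natlt R c1) (natlt R c2)).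
Qed.
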